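(* Let $B=\bigoplus_{i\in\mathbb{Z}}\mathbb{Z}_2$, let $m\ge1$, let $S_m$ be the set of $0/1$ sequences of length $m$, and let $\pi$ be any permutation of $S_m$. Define $\psi:B\to B$ by applying $\pi$ to the subsequence $(x_0,\dots,x_{m-1})$ of $x=(x_i)$ and leaving all other coordinates unchanged. Then $\psi$ is a bijection which is biLipschitz with respect to both $d_\ell$ and $d_u$, with biLipschitz constants at most $2^m$; i.e. $2^{-m}d(p,q)\le d(\psi(p),\psi(q))\le 2^m d(p,q)$ for all $p,q\in B$ and $d\in\{d_\ell,d_u\}$.
   Context: For distinct $p=(x_i),q=(y_i)\in B$: $d_\ell(p,q)=2^{-l_+}$ where $l_+$ is the smallest integer with $x_{l_+}\neq y_{l_+}$, and $d_u(p,q)=2^{l_-}$ where $l_-$ is the largest integer with $x_{l_-}\neq y_{l_-}$; $d_\ell(p,p)=d_u(p,p)=0$. (These are the metrics on the lower and upper boundaries of the Diestel–Leader graph $DL(2,2)$ restricted to $B$.) *)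

(* Defs.v *)
From mathcomp Require Import all_boot all_fingroup.
From Stdlib Require Import ZArith Reals ClassicalEpsilon Lia.

Set Implicit Arguments. Unset Strict Implicit. Unset Printing Implicit Defensive.

Definition finsupp (x : Z -> bool) : Prop :=
  exists N : Z, forall i : Z, (N < Z.abs i)%Z -> x i = false.

Definition B := {x : Z -> bool | finsupp x}.

Definition least_diff (x y : Z -> bool) (l : Z) : Prop :=
  x l <> y l /\ forall j : Z, (j < l)%Z -> x j = y j.

Definition greatest_diff (x y : Z -> bool) (l : Z) : Prop :=
  x l <> y l /\ forall j : Z, (l < j)%Z -> x j = y j.

Definition d_ell (x y : Z -> bool) : R :=
  if excluded_middle_informative (exists i, x i <> y i)
  then powerRZ 2 (- epsilon (inhabits 0%Z) (least_diff x y))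
  else 0%R.

Definition d_u (x y : Z -> bool) : R :=
  if excluded_middle_informative (exists i, x i <> y i)
  then powerRZ 2 (epsilon (inhabits 0%Z) (greatest_diff x y))
  else 0%R.

Definition window (m : nat) (x : Z -> bool) : {ffun 'I_m -> bool} :=
  [ffun j : 'I_m => x (Z.of_nat (nat_of_ord j))].

Definition psi_raw (m : nat) (pi : {perm {ffun 'I_m -> bool}}) (x : Z -> bool)
  : Z -> bool :=
  fun i => if (0 <=? i)%Z then
             match Z.to_nat i < m as b return (Z.to_nat i < m) = b -> bool with
             | true => fun h => pi (window m x) (Ordinal h)
             | false => fun _ => x i
             end erefl
           else x i.

Lemma psi_raw_finsupp m (pi : {perm {ffun 'I_m -> bool}}) x :
  finsupp x -> finsupp (psi_raw pi x).
Proof.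
move=> [N HN]; exists (Z.max N (Z.of_nat m)) => i Hi.
rewrite /psi_raw.
case: (Z.leb_spec0 0 i) => H0; last by apply: HN; lia.
have Hn : (Z.to_nat i < m) = false.
  apply/negbTE; rewrite -leqNgt; apply/leP; lia.
generalize (@erefl bool (Z.to_nat i < m)).
rewrite {2 3}Hn => _.
apply: HN; lia.
Qed.

Definition psi (m : nat) (pi : {perm {ffun 'I_m -> bool}}) (p : B) : B :=
  exist _ (psi_raw pi (proj1_sig p)) (psi_raw_finsupp pi (proj2_sig p)).

(* Main.v *)
Require Import Defs.
From mathcomp Require Import all_boot all_fingroup.
From Stdlib Require Import ZArith Reals Lia Lra ClassicalEpsilon ProofIrrelevance Classical FunctionalExtensionality.

Lemma least_ex (P : Z -> Prop) (L : Z) :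
  (forall i, P i -> (L <= i)%Z) -> (exists i, P i) ->
  exists l, P l /\ forall j, (j < l)%Z -> ~ P j.
Proof.
move=> HL [i Hi].
suff: forall n : nat, forall i, P i -> (Z.to_nat (i - L) <= n)%coq_nat ->
  exists l, P l /\ forall j, (j < l)%Z -> ~ P j.
  by move=> H; apply: (H (Z.to_nat (i - L)) i Hi); lia.
elim=> [|n IH] k Hk Hn.
  exists k; split=> // j Hj Pj; have := HL _ Pj; have := HL _ Hk; lia.
case: (classic (exists j, (j < k)%Z /\ P j)) => [[j [Hj Pj]]|Hno].
  apply: (IH j Pj); have := HL _ Pj; lia.
exists k; split=> // j Hj Pj; apply: Hno; exists j; done.
Qed.

Lemma greatest_ex (P : Z -> Prop) (U : Z) :
  (forall i, P i -> (i <= U)%Z) -> (exists i, P i) ->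
  exists l, P l /\ forall j, (l < j)%Z -> ~ P j.
Proof.
move=> HU [i Hi].
have [l [Pl Hl]] := @least_ex (fun z => P (- z)%Z) (- U)%Z
  ltac:(move=> z Pz; have := HU _ Pz; lia) (ex_intro (fun z => P (- z)%Z) (- i)%Z ltac:(by rewrite /= Z.opp_involutive)).
exists (- l)%Z; split=> // j Hj Pj; apply: (Hl (- j)%Z); first lia.
by rewrite Z.opp_involutive.
Qed.

Lemma diff_bound x y : finsupp x -> finsupp y ->
  exists N, forall i, x i <> y i -> (Z.abs i <= N)%Z.
Proof.
move=> [N1 H1] [N2 H2]; exists (Z.max N1 N2) => i Hi.
case: (Z.le_gt_cases (Z.abs i) (Z.max N1 N2)) => // Hc.
exfalso; apply: Hi; rewrite H1 ?H2 //; lia.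
Qed.

Lemma least_uniq x y l1 l2 : least_diff x y l1 -> least_diff x y l2 -> l1 = l2.
Proof.
move=> [A1 B1] [A2 B2]; case: (Z.lt_total l1 l2) => [h|[//|h]].
  by case: A1; apply: B2.
by case: A2; apply: B1.
Qed.

Lemma greatest_uniq x y l1 l2 : greatest_diff x y l1 -> greatest_diff x y l2 -> l1 = l2.
Proof.
move=> [A1 B1] [A2 B2]; case: (Z.lt_total l1 l2) => [h|[//|h]].
  by case: A2; apply: B1.
by case: A1; apply: B2.
Qed.

Lemma d_ell_val x y l : least_diff x y l -> d_ell x y = powerRZ 2 (- l).
Proof.
move=> H; rewrite /d_ell; destruct (excluded_middle_informative _) as [e0|n];
  last by exfalso; apply n; exists l; apply H.
have He := epsilon_spec (inhabits 0%Z) (least_diff x y) (ex_intro _ l H).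
by rewrite (@least_uniq x y _ _ He H).
Qed.

Lemma d_u_val x y l : greatest_diff x y l -> d_u x y = powerRZ 2 l.
Proof.
move=> H; rewrite /d_u; destruct (excluded_middle_informative _) as [e0|n];
  last by exfalso; apply n; exists l; apply H.
have He := epsilon_spec (inhabits 0%Z) (greatest_diff x y) (ex_intro _ l H).
by rewrite (@greatest_uniq x y _ _ He H).
Qed.

Lemma d_ell_0 x y : ~ (exists i, x i <> y i) -> d_ell x y = 0%R.
Proof. by move=> H; rewrite /d_ell; destruct (excluded_middle_informative _). Qed.
Lemma d_u_0 x y : ~ (exists i, x i <> y i) -> d_u x y = 0%R.
Proof. by move=> H; rewrite /d_u; destruct (excluded_middle_informative _). Qed.

Lemma d_ell_ge0 x y : (0 <= d_ell x y)%R.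
Proof. rewrite /d_ell; destruct (excluded_middle_informative _); simpl; [apply: powerRZ_le; lra|lra]. Qed.
Lemma d_u_ge0 x y : (0 <= d_u x y)%R.
Proof. rewrite /d_u; destruct (excluded_middle_informative _); simpl; [apply: powerRZ_le; lra|lra]. Qed.

Lemma least_of x y : finsupp x -> finsupp y -> (exists i, x i <> y i) ->
  exists l, least_diff x y l.
Proof.
move=> fx fy E; have [N HN] := @diff_bound x y fx fy.
have [l [Pl Hl]] := @least_ex (fun i => x i <> y i) (- N)%Z
  ltac:(move=> i Pi; have := HN _ Pi; lia) E.
exists l; split=> // j Hj; apply: NNPP => C; exact: Hl j Hj C.
Qed.

Lemma greatest_of x y : finsupp x -> finsupp y -> (exists i, x i <> y i) ->
  exists l, greatest_diff x y l.
Proof.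
move=> fx fy E; have [N HN] := @diff_bound x y fx fy.
have [l [Pl Hl]] := @greatest_ex (fun i => x i <> y i) N
  ltac:(move=> i Pi; have := HN _ Pi; lia) E.
exists l; split=> // j Hj; apply: NNPP => C; exact: Hl j Hj C.
Qed.

Lemma pow_mono (a b : Z) : (a <= b)%Z -> (powerRZ 2 a <= powerRZ 2 b)%R.
Proof.
move=> h; have -> : b = (a + Z.of_nat (Z.to_nat (b - a)))%Z by lia.
rewrite powerRZ_add; last lra.
rewrite -pow_powerRZ.
have := powerRZ_lt 2 a ltac:(lra).
have : (1 <= 2 ^ Z.to_nat (b - a))%R by apply: pow_R1_Rle; lra.
nra.
Qed.

Lemma dist_le (m : nat) x y x' y' :
  finsupp x -> finsupp y -> finsupp x' -> finsupp y' ->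
  (forall i, (i < 0 \/ Z.of_nat m <= i)%Z -> (x i <> y i <-> x' i <> y' i)) ->
  ((exists i, (0 <= i < Z.of_nat m)%Z /\ x i <> y i) <->
   (exists i, (0 <= i < Z.of_nat m)%Z /\ x' i <> y' i)) ->
  (d_ell x' y' <= 2 ^ m * d_ell x y)%R /\ (d_u x' y' <= 2 ^ m * d_u x y)%R.
Proof.
move=> fx fy fx' fy' H1 H2.
have m0 : (0 < 2 ^ m)%R by apply: pow_lt; lra.
case: (classic (exists i, x' i <> y' i)) => Ex'; last first.
  rewrite d_ell_0 // d_u_0 //; split; apply: Rmult_le_pos; try lra;
    [apply: d_ell_ge0|apply: d_u_ge0].
case: (classic (exists i, x i <> y i)) => Ex; last first.
  exfalso; case: Ex' => i Hi; apply: Ex.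
  case: (Z.lt_ge_cases i 0) => hi.
    by exists i; apply: (proj2 (H1 i ltac:(lia))).
  case: (Z.lt_ge_cases i (Z.of_nat m)) => hm.
    by have [j [_ Hj]] := proj2 H2 (ex_intro _ i (conj (conj hi hm) Hi)); exists j.
  by exists i; apply: (proj2 (H1 i ltac:(lia))).
have [l Hl] := @least_of x y fx fy Ex; have [l' Hl'] := @least_of x' y' fx' fy' Ex'.
have [g Hg] := @greatest_of x y fx fy Ex; have [g' Hg'] := @greatest_of x' y' fx' fy' Ex'.
rewrite (@d_ell_val x y _ Hl) (@d_ell_val x' y' _ Hl') (@d_u_val x y _ Hg) (@d_u_val x' y' _ Hg') pow_powerRZ.
rewrite -!powerRZ_add; try lra.
split; apply: pow_mono.
- case: Hl' => A' _; case: Hl => A B.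
  suff : (l <= l' + Z.of_nat m)%Z by lia.
  case: (Z.lt_ge_cases l' 0) => h0.
    have : x l' <> y l' by apply: (proj2 (H1 l' ltac:(lia))).
    move=> D; case: (Z.le_gt_cases l l') => C; first lia; by exfalso; apply: D; apply: B.
  case: (Z.lt_ge_cases l' (Z.of_nat m)) => hm.
    have [i [Hi Di]] := proj2 H2 (ex_intro _ l' (conj (conj h0 hm) A')).
    case: (Z.le_gt_cases l i) => C; first lia.
    by exfalso; apply: Di; apply: B.
  have : x l' <> y l' by apply: (proj2 (H1 l' ltac:(lia))).
  move=> D; case: (Z.le_gt_cases l l') => C; first lia. by exfalso; apply: D; apply: B.
- case: Hg' => A' _; case: Hg => A B.
  suff : (g' <= Z.of_nat m + g)%Z by lia.
  case: (Z.lt_ge_cases g' 0) => h0.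
    have : x g' <> y g' by apply: (proj2 (H1 g' ltac:(lia))).
    move=> D; case: (Z.le_gt_cases g' g) => C; first lia. by exfalso; apply: D; apply: B.
  case: (Z.lt_ge_cases g' (Z.of_nat m)) => hm.
    have [i [Hi Di]] := proj2 H2 (ex_intro _ g' (conj (conj h0 hm) A')).
    case: (Z.le_gt_cases i g) => C; first lia.
    by exfalso; apply: Di; apply: B.
  have : x g' <> y g' by apply: (proj2 (H1 g' ltac:(lia))).
  move=> D; case: (Z.le_gt_cases g' g) => C; first lia. by exfalso; apply: D; apply: B.
Qed.

Lemma psi_out m (pi : {perm {ffun 'I_m -> bool}}) x i :
  (i < 0 \/ Z.of_nat m <= i)%Z -> psi_raw pi x i = x i.
Proof.
move=> h; rewrite /psi_raw.
case: (Z.leb_spec0 0 i) => H0 //.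
have Hn : (Z.to_nat i < m) = false.
  apply/negbTE; rewrite -leqNgt; apply/leP; lia.
generalize (@erefl bool (Z.to_nat i < m)).
by rewrite {2 3}Hn.
Qed.

Lemma psi_in m (pi : {perm {ffun 'I_m -> bool}}) x i (h : Z.to_nat i < m) :
  (0 <= i)%Z -> psi_raw pi x i = pi (window m x) (Ordinal h).
Proof.
move=> h0; rewrite /psi_raw.
case: (Z.leb_spec0 0 i) => H0; last lia.
generalize (@erefl bool (Z.to_nat i < m)).
rewrite {2 3}h => e.
by congr (pi _ _); apply: val_inj.
Qed.

Lemma window_psi m (pi : {perm {ffun 'I_m -> bool}}) x :
  window m (psi_raw pi x) = pi (window m x).
Proof.
apply/ffunP => j; rewrite /window ffunE.
have h : Z.to_nat (Z.of_nat j) < m by rewrite Nat2Z.id.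
rewrite (@psi_in m pi x _ h); last lia.
by congr (pi _ _); apply: val_inj => /=; rewrite Nat2Z.id.
Qed.

Lemma window_neq m x y :
  window m x <> window m y <->
  (exists i, (0 <= i < Z.of_nat m)%Z /\ x i <> y i).
Proof.
split.
  move=> H; apply: NNPP => C; apply: H; apply/ffunP => j; rewrite !ffunE.
  apply: NNPP => D; apply: C; exists (Z.of_nat j); split=> //.
  have := ltn_ord j => /ltP; lia.
move=> [i [Hi D]] E; apply: D.
have h : Z.to_nat i < m by apply/ltP; lia.
have := congr1 (fun f : {ffun 'I_m -> bool} => f (Ordinal h)) E; rewrite !ffunE /=.
by rewrite Z2Nat.id //; lia.
Qed.

Lemma psi_raw_K m (pi : {perm {ffun 'I_m -> bool}}) x :
  psi_raw (pi^-1)%g (psi_raw pi x) = x.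
Proof.
apply: functional_extensionality => i.
case: (Z.lt_ge_cases i 0) => h0.
  by rewrite !psi_out //; left.
case: (Z.lt_ge_cases i (Z.of_nat m)) => hm; last by rewrite !psi_out //; right.
have h : Z.to_nat i < m by apply/ltP; lia.
rewrite (@psi_in m _ _ _ h) // window_psi permK /window ffunE /=.
by rewrite Z2Nat.id.
Qed.

Lemma psi_K m (pi : {perm {ffun 'I_m -> bool}}) : cancel (psi pi) (psi (pi^-1)%g).
Proof.
move=> [x hx]; rewrite /psi /=; apply: subset_eq_compat; exact: psi_raw_K.
Qed.

Lemma psi_hyps m (pi : {perm {ffun 'I_m -> bool}}) x y :
  (forall i, (i < 0 \/ Z.of_nat m <= i)%Z ->
     (x i <> y i <-> psi_raw pi x i <> psi_raw pi y i)) /\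
  ((exists i, (0 <= i < Z.of_nat m)%Z /\ x i <> y i) <->
   (exists i, (0 <= i < Z.of_nat m)%Z /\ psi_raw pi x i <> psi_raw pi y i)).
Proof.
split.
  by move=> i hi; rewrite !psi_out.
rewrite -!window_neq !window_psi; split=> H E; apply: H.
  exact: (perm_inj E).
by rewrite E.
Qed.

Theorem mainTheorem6 (m : nat) (hm : (1 <= m)%coq_nat)
  (pi : {perm {ffun 'I_m -> bool}}) :
  bijective (psi pi) /\
  (forall p q : B,
     (/ 2 ^ m * d_ell (proj1_sig p) (proj1_sig q)
        <= d_ell (proj1_sig (psi pi p)) (proj1_sig (psi pi q)))%R /\
     (d_ell (proj1_sig (psi pi p)) (proj1_sig (psi pi q))
        <= 2 ^ m * d_ell (proj1_sig p) (proj1_sig q))%R) /\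
  (forall p q : B,
     (/ 2 ^ m * d_u (proj1_sig p) (proj1_sig q)
        <= d_u (proj1_sig (psi pi p)) (proj1_sig (psi pi q)))%R /\
     (d_u (proj1_sig (psi pi p)) (proj1_sig (psi pi q))
        <= 2 ^ m * d_u (proj1_sig p) (proj1_sig q))%R).
Proof.
have m0 : (0 < 2 ^ m)%R by apply: pow_lt; lra.
have key : forall p q : B,
  ((d_ell (proj1_sig (psi pi p)) (proj1_sig (psi pi q)) <= 2 ^ m * d_ell (proj1_sig p) (proj1_sig q))%R /\
   (d_u (proj1_sig (psi pi p)) (proj1_sig (psi pi q)) <= 2 ^ m * d_u (proj1_sig p) (proj1_sig q))%R) /\
  ((d_ell (proj1_sig p) (proj1_sig q) <= 2 ^ m * d_ell (proj1_sig (psi pi p)) (proj1_sig (psi pi q)))%R /\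
   (d_u (proj1_sig p) (proj1_sig q) <= 2 ^ m * d_u (proj1_sig (psi pi p)) (proj1_sig (psi pi q)))%R).
  move=> [x hx] [y hy] /=.
  have [H1 H2] := @psi_hyps m pi x y.
  split.
    apply: (@dist_le m x y); try apply: psi_raw_finsupp => //; done.
  apply: (@dist_le m); try apply: psi_raw_finsupp => //; try done.
    by move=> i hi; rewrite -(H1 i hi).
  by rewrite H2.
have inv : forall a b : R, (b <= 2 ^ m * a)%R -> (/ 2 ^ m * b <= a)%R.
  move=> a b h.
  apply: (Rmult_le_reg_l (2 ^ m)) => //; rewrite -Rmult_assoc Rinv_r; lra.
split; first by exists (psi (pi^-1)%g); [apply: psi_K|move=> p; have := @psi_K m (pi^-1)%g p; rewrite invgK].
split=> p q; have [[A B1] [C D]] := key p q; split; try apply: inv; done.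
Qed.
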